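(* Let $G$ be a countable amenable group and $\{W_n\}$ an increasing sequence of finite subsets of $G$ with $1_G\in W_n$ such that (1) $\{W_n\}$ is a Følner sequence, and (2) for some constant $C$, each $W_n$ is individually $C$-incompressible. Then there exists a subsequence $\{W_{n(i)}\}$ which is quasi-incompressible.
   Context: Følner: $|W_n\triangle gW_n|/|W_n|\to0$ for every $g\in G$. A finite set $W\ni1_G$ is individually $C$-incompressible if for every sequence $\{Wf_i\}$ with $f_i\notin\bigcup_{j<i}Wf_j$ for all $i$, the number of sets $Wf_i$ containing $1_G$ is at most $C$. An increasing sequence $\{V_n\}$ of finite sets containing $1_G$, each individually $C$-incompressible for the same $C$, is quasi-incompressible if for every $\lambda>0$, for all large enough $k$ and every $n>k$, $\frac{1}{|V_n|}|\{f\in V_n: V_kf\not\subseteq V_n\}|\le|V_k|^{-\lambda}$. *)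

(* Defs.v *)
From mathcomp Require Import all_boot.
From mathcomp Require Import finmap.
From Stdlib Require Import Reals.

Set Implicit Arguments. Unset Strict Implicit. Unset Printing Implicit Defensive.

Local Open Scope fset_scope.

(* An (abstract, possibly infinite) group with carrier G, given by its
   operations; countability and decidable equality come from G : countType. *)
Record is_group (G : Type) (mul : G -> G -> G) (inv : G -> G) (one : G) : Prop :=
  { mulA : forall x y z, mul x (mul y z) = mul (mul x y) z;
    mul1g : forall x, mul one x = x;
    mulVg : forall x, mul (inv x) x = one }.

Section Defs.
Variable G : countType.
Variable mul : G -> G -> G.
Variable one : G.

Definition ltrans (g : G) (W : {fset G}) : {fset G} := [fset mul g w | w in W].
Definition rtrans (W : {fset G}) (f : G) : {fset G} := [fset mul w f | w in W].

Definition symdiff (A B : {fset G}) : {fset G} := (A `\` B) `|` (B `\` A).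

Definition Folner (W : nat -> {fset G}) : Prop :=
  forall g : G, forall eps : R, (0 < eps)%R ->
    exists N : nat, forall n : nat, (N <= n)%N ->
      (INR #|` symdiff (W n) (ltrans g (W n))| / INR #|` W n| <= eps)%R.

Definition amenable : Prop := exists W : nat -> {fset G}, Folner W.

Definition indiv_incompressible (C : nat) (W : {fset G}) : Prop :=
  one \in W /\
  forall s : seq G,
    (forall i j : nat, (i < size s)%N -> (j < i)%N ->
        nth one s i \notin rtrans W (nth one s j)) ->
    (count (fun f => one \in rtrans W f) s <= C)%N.

Definition increasing_seq (V : nat -> {fset G}) : Prop :=
  forall n : nat, V n `<=` V n.+1.

Definition bad_set (Vk Vn : {fset G}) : {fset G} :=
  [fset f in Vn | ~~ (rtrans Vk f `<=` Vn)].

Definition quasi_incompressible (V : nat -> {fset G}) : Prop :=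
  increasing_seq V /\
  (forall n, one \in V n) /\
  (exists C : nat, forall n, indiv_incompressible C (V n)) /\
  (forall lam : R, (0 < lam)%R ->
     exists K : nat, forall k : nat, (K <= k)%N -> forall n : nat, (k < n)%N ->
       (INR #|` bad_set (V k) (V n)| / INR #|` V n|
          <= Rpower (INR #|` V k|) (- lam))%R).

End Defs.

(* Main.v *)
Require Import Defs.
From mathcomp Require Import all_boot.
From mathcomp Require Import finmap.
From Stdlib Require Import Reals.
From Stdlib Require Import Lra IndefiniteDescription.

Local Open Scope fset_scope.

Lemma mul_inj (G : countType) (mul : G -> G -> G) (inv : G -> G) (one : G) :
  is_group mul inv one -> forall v x y, mul v x = mul v y -> x = y.
Proof.
move=> HG v x y E.
by rewrite -(Defs.mul1g HG x) -(Defs.mulVg HG v) -(Defs.mulA HG) E (Defs.mulA HG) (Defs.mulVg HG) (Defs.mul1g HG).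
Qed.

Lemma Bv_card (G : countType) (mul : G -> G -> G) (inv : G -> G) (one : G) :
  is_group mul inv one -> forall (V : {fset G}) v,
  (#|` [fset f in V | mul v f \notin V]| <= #|` symdiff V (ltrans mul v V)|)%N.
Proof.
move=> HG V v.
set B := [fset f in V | _].
have <- : #|` [fset mul v x | x in B]| = #|` B|.
  by rewrite card_imfset //=; apply: (@mul_inj _ _ _ _ HG v).
apply: fsubset_leq_card; apply/fsubsetP => y /imfsetP [x /= Hx ->].
move: Hx; rewrite !inE => /andP [HxV HvxV].
rewrite /symdiff ?inE (negbTE HvxV) andbF /= /ltrans.

by apply/imfsetP; exists x.
Qed.

Definition Xs {G : countType} (mul : G -> G -> G) (V : {fset G}) (s : seq G) :=
  [fset f in V | has (fun v => mul v f \notin V) s].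

Lemma Xs_eps (G : countType) (mul : G -> G -> G) (inv : G -> G) (one : G)
  (HG : is_group mul inv one) (W : nat -> {fset G})
  (H1 : forall n, one \in W n) (HF : Folner mul W) (d : R) (Hd : (0 < d)%R) :
  forall s : seq G, exists N, forall n, (N <= n)%N ->
    (INR #|` Xs mul (W n) s| <= INR (size s) * d * INR #|` W n|)%R.
Proof.
elim=> [|v s [N2 HN2]].
  exists 0%N => n _.
  have -> : Xs mul (W n) [::] = fset0.
    by apply/fsetP => x; rewrite !inE andbF.
  rewrite cardfs0 /=; lra.
have [N1 HN1] := HF v d Hd.
exists (maxn N1 N2) => n Hn.
have Hn1 : (N1 <= n)%N by apply: leq_trans Hn; apply: leq_maxl.
have Hn2 : (N2 <= n)%N by apply: leq_trans Hn; apply: leq_maxr.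
have Wpos : (0 < INR #|` W n|)%R.
  apply: lt_0_INR; apply/ltP; rewrite cardfs_gt0; apply/eqP => E.
  by have := H1 n; rewrite E inE.
have HS : (INR #|` symdiff (W n) (ltrans mul v (W n))| <= d * INR #|` W n|)%R.
  have := HN1 n Hn1.
  set a := INR _. set b := INR _ => h.
  have -> : a = (a / b * b)%R by rewrite /Rdiv Rmult_assoc Rinv_l ?Rmult_1_r //; apply: Rgt_not_eq; exact: Wpos.
  by apply: Rmult_le_compat_r; [exact: (Rlt_le _ _ Wpos) | exact: h].
have Hsub : Xs mul (W n) (v :: s) `<=` [fset f in W n | mul v f \notin W n] `|` Xs mul (W n) s.
  apply/fsubsetP => x; rewrite !inE /= => /andP [-> /orP [->|->]] //.
  by rewrite orbT.
have Hc := leq_trans (fsubset_leq_card Hsub) (leq_of_leqif (leq_card_fsetU _ _)).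
have Hc' : (#|` Xs mul (W n) (v :: s)| <= #|` symdiff (W n) (ltrans mul v (W n))| + #|` Xs mul (W n) s|)%N.
  apply: leq_trans Hc _.
  by rewrite leq_add2r; exact: (@Bv_card _ _ _ _ HG (W n) v).
have := le_INR _ _ (leP Hc'); rewrite plus_INR => h.
have := HN2 n Hn2.
have -> : size (v :: s) = (size s).+1 by []. rewrite S_INR => h2. nra.
Qed.

Lemma bad_eps (G : countType) (mul : G -> G -> G) (inv : G -> G) (one : G)
  (HG : is_group mul inv one) (W : nat -> {fset G})
  (H1 : forall n, one \in W n) (HF : Folner mul W) (A : {fset G}) (eps : R) :
  (0 < eps)%R -> exists N, forall n, (N <= n)%N ->
    (INR #|` bad_set mul A (W n)| <= eps * INR #|` W n|)%R.
Proof.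
move=> He.
set s := enum_fset A.
have Hs0 : (0 <= INR (size s))%R by apply: pos_INR.
set d := (eps / (INR (size s) + 1))%R.
have Hd : (0 < d)%R by rewrite /d /Rdiv; apply: Rmult_lt_0_compat => //; apply: Rinv_0_lt_compat; lra.
have Hsd : (INR (size s) * d <= eps)%R.
  have -> : (INR (size s) * d = eps - d)%R by rewrite /d; field; lra.
  lra.
have [N HN] := @Xs_eps _ _ _ _ HG W H1 HF d Hd s.
exists N => n Hn.
have Wpos : (0 <= INR #|` W n|)%R by apply: pos_INR.
have Hsub : bad_set mul A (W n) `<=` Xs mul (W n) s.
  apply/fsubsetP => f; rewrite !inE /= => /andP [-> /fsubsetPn [y Hy Hny]] /=.
  move: Hy => /imfsetP [w /= Hw Ey].
  apply/hasP; exists w; first by [].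
  by rewrite -Ey.
have := le_INR _ _ (leP (fsubset_leq_card Hsub)).
have := HN n Hn.
have := Rmult_le_compat_r _ _ _ Wpos Hsd.
move=> h1 h2 h3; apply: Rle_trans h3 _; apply: Rle_trans h2 _; exact: h1.
Qed.

Lemma Rpower_mono (a b x y : R) : (1 <= a)%R -> (a <= b)%R -> (0 <= x)%R -> (x <= y)%R ->
  (Rpower b (- y) <= Rpower a (- x))%R.
Proof.
move=> Ha Hab Hx Hxy.
rewrite /Rpower.
have la : (0 <= ln a)%R.
  case: (Rle_lt_or_eq_dec _ _ Ha) => h; last by rewrite -h ln_1; lra.
  rewrite -ln_1; apply: Rlt_le; apply: ln_increasing; lra.
have lab : (ln a <= ln b)%R.
  case: (Rle_lt_or_eq_dec _ _ Hab) => h; last by rewrite h; lra.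
  apply: Rlt_le; apply: ln_increasing; lra.
have : (- y * ln b <= - x * ln a)%R by nra.
case/Rle_lt_or_eq_dec => h; last by rewrite h; lra.
by apply: Rlt_le; apply: exp_increasing.
Qed.

Lemma W_mono (G : countType) (W : nat -> {fset G}) :
  increasing_seq W -> forall m n, (m <= n)%N -> W m `<=` W n.
Proof.
move=> Hinc m n /subnK <-; elim: (n - m)%N => [|k IH] //=.
by apply: fsubset_trans IH (Hinc _).
Qed.

Lemma bad_mono (G : countType) (mul : G -> G -> G) (A B V : {fset G}) :
  A `<=` B -> bad_set mul A V `<=` bad_set mul B V.
Proof.
move=> HAB; apply/fsubsetP => f; rewrite !inE /= => /andP [-> H] /=.
apply: contra H => H; apply: fsubset_trans H.
apply/fsubsetP => y /imfsetP [w /= Hw ->]; apply/imfsetP; exists w => //.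
exact: (fsubsetP HAB).
Qed.

Arguments W_mono {G W}.
Arguments bad_mono {G} mul {A B} V.

Theorem lemma2p3 (G : countType) (mul : G -> G -> G) (inv : G -> G) (one : G)
  (HG : is_group mul inv one)
  (Hamen : amenable mul)
  (W : nat -> {fset G})
  (Hinc : increasing_seq W)
  (H1 : forall n, one \in W n)
  (HF : Folner mul W)
  (C : nat) (HC : forall n, indiv_incompressible mul one C (W n)) :
  exists nseq : nat -> nat,
    (forall i, (nseq i < nseq i.+1)%N) /\
    quasi_incompressible mul one (fun i => W (nseq i)).
Proof.
have Wpos : forall n, (0 < INR #|` W n|)%R.
  move=> n; apply: lt_0_INR; apply/ltP; rewrite cardfs_gt0; apply/eqP => E.
  by have := H1 n; rewrite E inE.
have W1 : forall n, (1 <= INR #|` W n|)%R.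
  move=> n; apply: (le_INR 1); apply/leP; rewrite cardfs_gt0; apply/eqP => E.
  by have := H1 n; rewrite E inE.
have Hstep : forall i m, exists N, (m < N)%N /\ forall n, (N <= n)%N ->
    (INR #|` bad_set mul (W m) (W n)| <= Rpower (INR #|` W m|) (- INR i) * INR #|` W n|)%R.
  move=> i m.
  have [N HN] := @bad_eps _ _ _ _ HG W H1 HF (W m) _ (exp_pos (- INR i * ln (INR #|` W m|))).
  exists (maxn N m.+1); split; first exact: leq_maxr.
  move=> n Hn; apply: HN; apply: leq_trans Hn; exact: leq_maxl.
pose f i m := proj1_sig (constructive_indefinite_description _ (Hstep i m)).
have Hf : forall i m, (m < f i m)%N /\ forall n, (f i m <= n)%N ->
    (INR #|` bad_set mul (W m) (W n)| <= Rpower (INR #|` W m|) (- INR i) * INR #|` W n|)%R.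
  move=> i m; exact: (proj2_sig (constructive_indefinite_description _ (Hstep i m))).
pose ns i := iteri i f 0%N.
have nsS : forall i, ns i.+1 = f i (ns i) by [].
have nsinc : forall i, (ns i < ns i.+1)%N by move=> i; rewrite nsS; case: (Hf i (ns i)).
have nsmono : forall i j, (i <= j)%N -> (ns i <= ns j)%N.
  move=> i j /subnK <-; elim: (j - i)%N => [|k IH] //=.
  by apply: leq_trans IH (ltnW (nsinc _)).
exists ns; split => //.
split; first by move=> i; apply: (W_mono Hinc); apply: ltnW.
split; first by move=> i.
split; first by exists C.
move=> lam Hlam.
have [K HK] := INR_unbounded lam.
exists K => k Hk t Hkt.
case: t Hkt => [|t] // Hkt.
have Hkt' : (k <= t)%N by [].
have Hsub := bad_mono mul (W (ns t.+1)) (W_mono Hinc _ _ (nsmono _ _ Hkt')).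
have := le_INR _ _ (leP (fsubset_leq_card Hsub)).
have := (Hf t (ns t)).2 (ns t.+1) (leqnn _).
move=> h2 h1.
have Hp : (Rpower (INR #|` W (ns t)|) (- INR t) <= Rpower (INR #|` W (ns k)|) (- lam))%R.
  apply: Rpower_mono => //; first by apply: le_INR; apply/leP; apply: fsubset_leq_card; apply: (W_mono Hinc); apply: nsmono.
    lra.
  have : (INR K <= INR t)%R by apply: le_INR; apply/leP; apply: leq_trans Hkt'.
  lra.
have Vp := Wpos (ns t.+1).
set b := INR #|` bad_set _ _ _| in h1 *.
set v := INR #|` W (ns t.+1)| in h2 Vp *.
set r := Rpower _ (- lam) in Hp *.
have -> : (b / v = b * / v)%R by [].
apply: (Rmult_le_reg_r v) => //.
rewrite Rmult_assoc Rinv_l ?Rmult_1_r; last by apply: Rgt_not_eq.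
nra.
Qed.
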